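(* Let $\varepsilon>0$ and $\delta\in(0,1)$, and let $\pi_{\mathrm{opt}}:\mathbb{N}\to[0,1]$ be defined by $\pi_{\mathrm{opt}}(0)=0$ and $\pi_{\mathrm{opt}}(n+1)=\min\left(e^{\varepsilon}\pi_{\mathrm{opt}}(n)+\delta,\;1-e^{-\varepsilon}(1-\pi_{\mathrm{opt}}(n)-\delta),\;1\right)$ for $n\ge0$. Let $n_1$ be the largest integer $n\ge1$ such that $\pi_{\mathrm{opt}}(n-1)\le \frac{1-\delta}{e^{\varepsilon}+1}$ (equivalently, the last index $n$ for which the first argument $e^{\varepsilon}\pi_{\mathrm{opt}}(n-1)+\delta$ of the minimum is the active one). Then \[ n_1=1+\left\lfloor\frac{1}{\varepsilon}\ln\left(\frac{e^{\varepsilon}+2\delta-1}{\delta(e^{\varepsilon}+1)}\right)\right\rfloor . \]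
   Context: $\mathbb{N}=\{0,1,2,\dots\}$. $\pi_{\mathrm{opt}}$ is the optimal partition selection primitive for $(\varepsilon,\delta)$-differential privacy: the pointwise largest $\pi:\mathbb{N}\to[0,1]$ with $\pi(0)=0$ such that releasing a partition with $n$ users with probability $\pi(n)$ is $(\varepsilon,\delta)$-DP with respect to adding or removing one user; it satisfies the recurrence stated. The value $\frac{1-\delta}{e^{\varepsilon}+1}$ is the point $x$ where $e^{\varepsilon}x+\delta=1-e^{-\varepsilon}(1-x-\delta)$. *)

(* Defs.v *)
From Stdlib Require Import Reals Lra Lia ZArith.
Open Scope R_scope.

Fixpoint pi_opt (eps delta : R) (n : nat) : R :=
  match n with
  | O => 0
  | S m =>
      let p := pi_opt eps delta m in
      Rmin (Rmin (exp eps * p + delta) (1 - exp (- eps) * (1 - p - delta))) 1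
  end.

(* floor of a real number: Int_part r = up r - 1 satisfies
   IZR (Int_part r) <= r < IZR (Int_part r) + 1. *)
Definition floorR (r : R) : Z := Int_part r.

(* Main.v *)
Require Import Defs.
From Stdlib Require Import Reals ZArith Lra Lia Psatz.
Open Scope R_scope.

Lemma exp_pow_nat (e : R) (k : nat) : exp e ^ k = exp (INR k * e).
Proof.
  induction k as [|k IH].
  - simpl. rewrite Rmult_0_l, exp_0; reflexivity.
  - change (exp e ^ S k) with (exp e * exp e ^ k). rewrite IH, S_INR. replace ((INR k + 1) * e) with (e + INR k * e) by ring.
    rewrite exp_plus; ring.
Qed.

Lemma step_low (a b d p : R) : 1 < a -> a * b = 1 -> 0 < b -> 0 < d -> d < 1 ->
  0 <= p -> p <= (1 - d) / (a + 1) ->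
  Rmin (Rmin (a * p + d) (1 - b * (1 - p - d))) 1 = a * p + d.
Proof.
  intros Ha Hab Hb Hd0 Hd1 Hp HT.
  assert (HT' : (a + 1) * p <= 1 - d).
  { apply (Rmult_le_compat_l (a+1)) in HT; [|lra].
    replace ((a + 1) * ((1 - d) / (a + 1))) with (1-d) in HT by (field; lra). lra. }
  assert (Hbinv : b = / a) by (field_simplify_eq; [lra| lra]).
  assert (E : 1 - b * (1 - p - d) - (a * p + d) = b * (a - 1) * ((1 - d) - (a + 1) * p)).
  { rewrite Hbinv. field. lra. }
  assert (0 <= b * (a - 1) * ((1 - d) - (a + 1) * p)).
  { apply Rmult_le_pos; [apply Rmult_le_pos|]; lra. }
  rewrite Rmin_left.
  - apply Rmin_left. nra.
  - unfold Rmin; destruct (Rle_dec _ _); nra.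
Qed.

Lemma step_high (a b d p T : R) : 1 < a -> 0 < b -> b < 1 -> 0 < d ->
  0 <= T -> T < 1 -> T < p ->
  T < Rmin (Rmin (a * p + d) (1 - b * (1 - p - d))) 1.
Proof.
  intros. apply Rmin_glb_lt; [apply Rmin_glb_lt|]; nra.
Qed.

Theorem lemma4 (eps delta : R) (heps : 0 < eps) (hd0 : 0 < delta) (hd1 : delta < 1) :
  exists n1 : nat,
    (1 <= n1)%nat /\
    pi_opt eps delta (n1 - 1) <= (1 - delta) / (exp eps + 1) /\
    (forall n : nat, (1 <= n)%nat ->
       pi_opt eps delta (n - 1) <= (1 - delta) / (exp eps + 1) -> (n <= n1)%nat) /\
    Z.of_nat n1 =
      (1 + floorR (/ eps * ln ((exp eps + 2 * delta - 1) / (delta * (exp eps + 1)))))%Z.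
Proof.
  set (a := exp eps).
  set (T := (1 - delta) / (a + 1)).
  set (X := (a + 2 * delta - 1) / (delta * (a + 1))).
  set (L := / eps * ln X).
  set (b := exp (- eps)).
  assert (Ha : 1 < a). { unfold a. rewrite <- exp_0. apply exp_increasing; lra. }
  assert (Hab : a * b = 1). { unfold a, b. rewrite exp_Ropp. field. apply Rgt_not_eq, exp_pos. }
  assert (Hb0 : 0 < b) by apply exp_pos.
  assert (Hb1 : b < 1) by nra.
  assert (HT0 : 0 <= T). { unfold T. apply Rmult_le_pos; [lra|]. apply Rlt_le, Rinv_0_lt_compat; lra. }
  assert (HT1 : T < 1). { unfold T. apply (Rmult_lt_reg_l (a+1)); [lra|].
     replace ((a + 1) * ((1 - delta) / (a + 1))) with (1-delta) by (field; lra). lra. }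
  assert (HX1 : 1 <= X). { unfold X. apply (Rmult_le_reg_l (delta * (a+1))); [nra|].
     replace (delta * (a + 1) * ((a + 2 * delta - 1) / (delta * (a + 1)))) with (a + 2*delta - 1)
       by (field; nra). nra. }
  assert (HX0 : 0 < X) by lra.
  assert (HL0 : 0 <= L).
  { unfold L. apply Rmult_le_pos; [apply Rlt_le, Rinv_0_lt_compat; lra|].
    destruct (Rle_lt_dec 0 (ln X)) as [h|h]; auto.
    apply exp_increasing in h. rewrite exp_ln in h; auto. rewrite exp_0 in h. lra. }
  set (q := fun k : nat => delta * (a ^ k - 1) / (a - 1)).
  assert (HTX : T = delta * (X - 1) / (a - 1)).
  { unfold T, X. field. split; nra. }
  assert (Hq_le : forall k : nat, INR k <= L -> q k <= T).
  { intros k hk. unfold q. rewrite HTX.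
    assert (a ^ k <= X).
    { unfold a. rewrite exp_pow_nat. rewrite <- (exp_ln X) by auto.
      assert (INR k * eps <= ln X).
      { unfold L in hk. apply (Rmult_le_compat_l eps) in hk; [|lra].
        replace (eps * (/ eps * ln X)) with (ln X) in hk by (field; lra). lra. }
      destruct (Rle_lt_or_eq_dec _ _ H) as [h|h]. apply Rlt_le, exp_increasing; auto.
      rewrite h; lra. }
    unfold Rdiv. apply Rmult_le_compat_r. apply Rlt_le, Rinv_0_lt_compat; lra. nra. }
  assert (Hq_gt : forall k : nat, L < INR k -> T < q k).
  { intros k hk. unfold q. rewrite HTX.
    assert (X < a ^ k).
    { unfold a. rewrite exp_pow_nat. rewrite <- (exp_ln X) by auto.
      apply exp_increasing.
      unfold L in hk. apply (Rmult_lt_compat_l eps) in hk; [|lra].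
      replace (eps * (/ eps * ln X)) with (ln X) in hk by (field; lra). lra. }
    unfold Rdiv. apply Rmult_lt_compat_r. apply Rinv_0_lt_compat; lra. nra. }
  assert (Hq0 : forall k, 0 <= q k).
  { intro k. unfold q. unfold Rdiv. apply Rmult_le_pos; [|apply Rlt_le, Rinv_0_lt_compat; lra].
    apply Rmult_le_pos; [lra|]. assert (1 <= a ^ k) by (apply pow_R1_Rle; lra). lra. }
  assert (Hqs : forall k, q (S k) = a * q k + delta).
  { intro k. unfold q. simpl. field. lra. }
  destruct (base_Int_part L) as [HF1 HF2].
  set (F := Int_part L).
  fold F in HF1, HF2.
  assert (HF0 : (0 <= F)%Z).
  { assert (h : (-1 < F)%Z) by (apply lt_IZR; lra). lia. }
  set (m := S (Z.to_nat F)).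
  assert (HINR : forall k, (k <= Z.to_nat F)%nat -> INR k <= L).
  { intros k hk. rewrite INR_IZR_INZ. apply Rle_trans with (IZR F); auto.
    apply IZR_le. lia. }
  assert (HmL : L < INR m).
  { unfold m. rewrite S_INR, INR_IZR_INZ, Z2Nat.id by lia. lra. }
  assert (HA : forall k, (k <= m)%nat -> pi_opt eps delta k = q k).
  { induction k as [|k IH]; intro hk.
    - simpl. unfold q. simpl. field. lra.
    - simpl. rewrite IH by lia. fold a b.
      rewrite step_low; auto.
      all: try (symmetry; apply Hqs).
      { fold T. apply Hq_le, HINR. unfold m in hk. lia. } }
  assert (HB : forall j, T < pi_opt eps delta (m + j)).
  { induction j as [|j IH].
    - rewrite Nat.add_0_r, HA by lia. auto.
    - rewrite Nat.add_succ_r. simpl. fold a b.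
      apply step_high; auto. }
  exists m. split; [unfold m; lia|]. split; [|split].
  - rewrite HA by lia. apply Hq_le, HINR. unfold m; lia.
  - intros n hn hle. destruct (le_lt_dec n m) as [h|h]; auto.
    exfalso. specialize (HB (n - 1 - m)%nat).
    replace (m + (n - 1 - m))%nat with (n - 1)%nat in HB by lia. fold a T in hle. lra.
  - unfold m. rewrite Nat2Z.inj_succ, Z2Nat.id by lia. unfold floorR. fold a X L. fold F. lia.
Qed.
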